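(* Let $n\ge3$ and let $f$ be a $\gamma_{tr3}(P_3\square P_n)$-function such that the number of vertices $v$ with $f(v)=\emptyset$ is minimum among all $\gamma_{tr3}(P_3\square P_n)$-functions. If $j\in\{0,1,\dots,n-2\}$ satisfies $|f((1,j))|=2$, then $|f((1,j+1))|=|f((2,j))|=0$.
   Context: $P_m$ denotes the directed path with vertex set $\{0,1,\dots,m-1\}$ and arcs $(i,i+1)$ for $0\le i\le m-2$. The Cartesian product $D_1\square D_2$ has vertex set $V(D_1)\times V(D_2)$, with an arc from $(x_1,y_1)$ to $(x_2,y_2)$ iff either $(x_1,x_2)$ is an arc of $D_1$ and $y_1=y_2$, or $x_1=x_2$ and $(y_1,y_2)$ is an arc of $D_2$. For a digraph $D$ and positive integer $k$, a $k$-rainbow dominating function on $D$ is $f:V(D)\to\mathcal P(\{1,\dots,k\})$ such that every $v$ with $f(v)=\emptyset$ satisfies $\bigcup_{u\in N^-(v)}f(u)=\{1,\dots,k\}$, where $N^-(v)$ is the set of in-neighbors of $v$; its weight is $\sum_v|f(v)|$. It is total if additionally the subdigraph induced by $\{v:f(v)\ne\emptyset\}$ has no isolated vertex (a vertex with neither in- nor out-neighbors in it). $\gamma_{trk}(D)$ is the minimum weight of a total $k$-rainbow dominating function, and a $\gamma_{trk}(D)$-function is one attaining it. *)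

(* Defs.v *)
From mathcomp Require Import all_boot.
Set Implicit Arguments. Unset Strict Implicit. Unset Printing Implicit Defensive.

Definition dipath (m : nat) : rel 'I_m := fun i j => (nat_of_ord j == (nat_of_ord i).+1).

Definition cartprod (V1 V2 : finType) (D1 : rel V1) (D2 : rel V2) : rel (V1 * V2) :=
  fun a b => (D1 a.1 b.1 && (a.2 == b.2)) || ((a.1 == b.1) && D2 a.2 b.2).

(* Colours {1,...,k} are represented by 'I_k = {0,...,k-1}. *)
Definition rainbow_dom (V : finType) (k : nat) (D : rel V)
  (f : {ffun V -> {set 'I_k}}) : Prop :=
  forall v, f v = set0 -> \bigcup_(u | D u v) f u = [set: 'I_k].

(* Total: the subdigraph induced by {v | f v <> empty} has no isolated vertex. *)
Definition total_rainbow_dom (V : finType) (k : nat) (D : rel V)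
  (f : {ffun V -> {set 'I_k}}) : Prop :=
  rainbow_dom D f /\
  forall v, f v != set0 -> exists u, (f u != set0) /\ (D u v || D v u).

Definition rweight (V : finType) (k : nat) (f : {ffun V -> {set 'I_k}}) : nat :=
  \sum_(v : V) #|f v|.

Definition gamma_trk_function (V : finType) (k : nat) (D : rel V)
  (f : {ffun V -> {set 'I_k}}) : Prop :=
  total_rainbow_dom D f /\
  forall g : {ffun V -> {set 'I_k}}, total_rainbow_dom D g -> rweight f <= rweight g.

Definition num_empty (V : finType) (k : nat) (f : {ffun V -> {set 'I_k}}) : nat :=
  #|[set v | f v == set0]|.

Definition P3Pn (n : nat) : rel ('I_3 * 'I_n) := @cartprod (ordinal 3) (ordinal n) (@dipath 3) (@dipath n).
Arguments P3Pn n : clear implicits.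

(* Main.v *)
Require Import Defs.
From mathcomp Require Import all_boot zify.
Set Implicit Arguments. Unset Strict Implicit. Unset Printing Implicit Defensive.

Lemma trd_mono (V:finType) (D: rel V) (f g : {ffun V -> {set 'I_3}}) v0 :
 total_rainbow_dom D f ->
 (forall v, v != v0 -> f v \subset g v) ->
 g v0 != set0 ->
 (forall w, D v0 w -> g w != set0) ->
 (forall v, g v != set0 -> f v = set0 -> D v0 v) ->
 total_rainbow_dom D g.
Proof.
move=> [hd ht] hsub hg0 hout hnew; split.
- move=> w gw.
  have wv0: w != v0 by apply/eqP => E; move: hg0; rewrite -E gw eqxx.
  have fw : f w = set0 by apply/eqP; rewrite -subset0 -gw hsub.
  apply/eqP; rewrite eqEsubset subsetT /= -(hd w fw).
  apply/bigcupsP => u Duw.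
  have uv0 : u != v0.
    by apply/eqP => E; rewrite E in Duw; move: (hout w Duw); rewrite gw eqxx.
  apply: subset_trans (hsub u uv0) _. exact: (bigcup_sup u Duw).
- move=> v gv. case: (eqVneq (f v) set0) => fv.
  + by exists v0; split=> //; rewrite (hnew v gv fv).
  + case: (ht v fv) => u [fu Duv]. case: (eqVneq u v0) => [E|uv0].
      by exists v0; split=> //; rewrite -E.
    exists u; split=> //.
    apply/negP => /eqP gu0; have := hsub u uv0; rewrite gu0 subset0 => fu0.
    by rewrite fu0 in fu.
Qed.

Lemma rweight_upd (V:finType) (f g : {ffun V -> {set 'I_3}}) v0 w : v0 != w ->
  (forall v, v != v0 -> v != w -> g v = f v) ->
  rweight g + #|f v0| + #|f w| = rweight f + #|g v0| + #|g w|.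
Proof.
move=> ne h; rewrite /rweight (bigD1 v0) // (bigD1 v0 (F := fun v => #|f v|)) //=.
rewrite (bigD1 w) /=; last by rewrite eq_sym.
rewrite (bigD1 w (F := fun v => #|f v|)) /=; last by rewrite eq_sym.
rewrite (eq_bigr (fun v => #|f v|)); last first.
  by move=> v /andP[hv1 hv2]; rewrite h.
set S := (\sum_(i | _) _); lia.
Qed.
Theorem lemma4p9 (n : nat) (hn : 3 <= n)
  (f : {ffun 'I_3 * 'I_n -> {set 'I_3}})
  (hf : gamma_trk_function (P3Pn n) f)
  (hmin : forall g : {ffun 'I_3 * 'I_n -> {set 'I_3}},
            gamma_trk_function (P3Pn n) g -> num_empty f <= num_empty g)
  (j : 'I_n) (hj : j.+1 < n)
  (h2 : #|f (inord 1, j)| = 2) :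
  #|f (inord 1, Ordinal hj)| = 0 /\ #|f (inord 2, j)| = 0.
Proof.
set v0 : 'I_3 * 'I_n := (inord 1, j).
set v1 : 'I_3 * 'I_n := (inord 1, Ordinal hj).
set v2 : 'I_3 * 'I_n := (inord 2, j).
have ne01 : v0 != v1.
  by apply/eqP => /(congr1 (fun p => val p.2)) /=; lia.
have ne02 : v0 != v2.
  by apply/eqP => /(congr1 (fun p => val p.1)) /=; rewrite !inordK //.
have D01 : P3Pn n v0 v1 by rewrite /P3Pn /cartprod /dipath /= !eqxx orbT.
have D02 : P3Pn n v0 v2 by rewrite /P3Pn /cartprod /dipath /= !inordK // !eqxx.
have out : forall w, P3Pn n v0 w -> w = v1 \/ w = v2.
  case=> x y; rewrite /P3Pn /cartprod /dipath /= inordK //.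
  move=> /orP[/andP[/eqP hx /eqP hy] | /andP[/eqP hx /eqP hy]].
  - right; rewrite /v2 -hy; congr pair; apply: val_inj; by rewrite /= hx inordK.
  - left; congr pair; [ by rewrite hx | apply: val_inj; by rewrite /= hy ].
have [a ha] : exists a, a \in f v0 by apply/set0Pn; rewrite -card_gt0 h2.
have fv0 : f v0 != set0 by rewrite -card_gt0 h2.
have ca : #|f v0 :\ a| = 1.
  by have := cardsD1 a (f v0); rewrite ha h2 add1n => -[<-].
have s10 : [set a] != set0 by rewrite -card_gt0 cards1.
case: hf => htf hwf.
have fillcase : forall w o, f w = set0 -> f o != set0 -> w != v0 -> o != v0 ->
    (forall x, P3Pn n v0 x -> x = w \/ x = o) -> P3Pn n v0 w -> False.
  move=> w o fw fo wv0 ov0 outw Dw.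
  pose g := [ffun v => if v == v0 then [set a] else if v == w then f v0 :\ a else f v].
  have gv0 : g v0 = [set a] by rewrite ffunE eqxx.
  have gw : g w = f v0 :\ a by rewrite ffunE (negbTE wv0) eqxx.
  have gw0 : g w != set0 by rewrite -card_gt0 gw ca.
  have go : forall v, v != v0 -> v != w -> g v = f v.
    by move=> v h1 h3; rewrite ffunE (negbTE h1) (negbTE h3).
  have tg : total_rainbow_dom (P3Pn n) g.
    apply: (trd_mono htf (v0 := v0)).
    - move=> v hv; case: (eqVneq v w) => [->|hvw]; first by rewrite fw sub0set.
      by rewrite go.
    - by rewrite gv0.
    - move=> x /outw [->|->] //.
      case: (eqVneq o w) => [->|hwo] //; by rewrite go.
    - move=> v gv fv; case: (eqVneq v w) => [->|hvw] //.
      case: (eqVneq v v0) => [E|hv0]; first by rewrite -E fv eqxx in fv0.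
      by rewrite go // fv eqxx in gv.
  have rw := rweight_upd (f := f) (g := g) (v0 := v0) (w := w) (ltac:(by rewrite eq_sym)) go.
  rewrite gv0 gw cards1 ca h2 fw cards0 in rw.
  have gg : gamma_trk_function (P3Pn n) g.
    split=> // h th; have := hwf h th; lia.
  have := hmin g gg; rewrite /num_empty.
  have -> : [set v | g v == set0] = [set v | f v == set0] :\ w.
    apply/setP => v; rewrite !inE; case: (eqVneq v w) => [->|hvw] /=.
      by rewrite (negbTE gw0).
    case: (eqVneq v v0) => [->|hv0]; first by rewrite gv0 (negbTE s10) (negbTE fv0).
    by rewrite go.
  have := cardsD1 w [set v | f v == set0]; rewrite inE fw eqxx /=; lia.
case: (eqVneq (f v1) set0) => f1; case: (eqVneq (f v2) set0) => f2.
- by move: f1 f2; rewrite /v1 /v2 => -> ->; rewrite cards0.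
- exfalso; apply: (fillcase v1 v2); rewrite // ?(eq_sym _ v0) //.
- exfalso; apply: (fillcase v2 v1); rewrite // ?(eq_sym _ v0) //.
  by move=> x /out [] ->; [right|left].
- exfalso.
  pose g := [ffun v => if v == v0 then [set a] else f v].
  have gv0 : g v0 = [set a] by rewrite ffunE eqxx.
  have go : forall v, v != v0 -> v != v1 -> g v = f v.
    by move=> v h1 h3; rewrite ffunE (negbTE h1).
  have tg : total_rainbow_dom (P3Pn n) g.
    apply: (trd_mono htf (v0 := v0)).
    - by move=> v hv; rewrite ffunE (negbTE hv).
    - by rewrite gv0.
    - move=> x /out [->|->]; rewrite ffunE; [by rewrite eq_sym in ne01; rewrite (negbTE ne01)|].
      by rewrite eq_sym in ne02; rewrite (negbTE ne02).
    - move=> v gv fv; case: (eqVneq v v0) => [E|hv0]; first by rewrite -E fv eqxx in fv0.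
      by move: gv; rewrite ffunE (negbTE hv0) fv eqxx.
  have rw := rweight_upd (f := f) (g := g) (v0 := v0) (w := v1) ne01 go.
  have gv1 : g v1 = f v1 by rewrite ffunE; rewrite eq_sym in ne01; rewrite (negbTE ne01).
  rewrite gv0 gv1 cards1 h2 in rw.
  have := hwf g tg; move: rw.
  set A := rweight g; set B := rweight f; set C := #|f v1|; lia.
Qed.
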